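(* Every perinormal domain $R$ satisfies (R$_1$), i.e., $R_{\mathfrak{p}}$ is a valuation domain for every height one prime $\mathfrak{p}$ of $R$.
   Context: All rings are commutative with identity; ''local'' means having a unique maximal ideal; an overring of a domain $R$ is a ring between $R$ and its fraction field. A ring extension $A \subseteq B$ satisfies going-down if whenever $\mathfrak{p} \subset \mathfrak{q}$ are primes of $A$ and $Q$ is a prime of $B$ with $Q \cap A = \mathfrak{q}$, there is a prime $P \subseteq Q$ of $B$ with $P \cap A = \mathfrak{p}$. A domain $R$ is perinormal if every local overring $S$ of $R$ such that $R \subseteq S$ satisfies going-down is a localization of $R$. *)

(* Defs.v *)
(* A domain R is represented as a subring of a field K
   whose fraction field is K; overrings, localizations and ideals are
   represented as subsets (predicates) of K. *)
From mathcomp Require Import all_boot all_algebra.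
Set Implicit Arguments. Unset Strict Implicit. Unset Printing Implicit Defensive.
Import GRing.Theory.
Local Open Scope ring_scope.

Section CommAlg.
Variable K : fieldType.
Implicit Types A B R S P Q I : K -> Prop.

Definition subset_of A B := forall x, A x -> B x.
Definition same_set A B := forall x, A x <-> B x.

Definition subring A : Prop :=
  A 0 /\ A 1 /\ (forall x y, A x -> A y -> A (x - y)) /\
  (forall x y, A x -> A y -> A (x * y)).

Definition frac_field_of R : Prop :=
  forall x : K, exists a b, R a /\ R b /\ b != 0 /\ x = a / b.

Definition overring R S : Prop := subring S /\ subset_of R S.

Definition ideal_of A I : Prop :=
  subset_of I A /\ I 0 /\ (forall x y, I x -> I y -> I (x + y)) /\
  (forall a x, A a -> I x -> I (a * x)).

Definition prime_of A P : Prop :=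
  ideal_of A P /\ ~ P 1 /\
  (forall a b, A a -> A b -> P (a * b) -> P a \/ P b).

Definition maximal_of A M : Prop :=
  ideal_of A M /\ ~ M 1 /\
  (forall I, ideal_of A I -> ~ I 1 -> subset_of M I -> subset_of I M).

Definition local_ring A : Prop :=
  exists M, maximal_of A M /\ forall N, maximal_of A N -> same_set N M.

Definition contracts_to A Q p : Prop := forall x, A x -> (Q x <-> p x).

Definition going_down A B : Prop :=
  forall p q Q, prime_of A p -> prime_of A q -> subset_of p q ->
    prime_of B Q -> contracts_to A Q q ->
    exists P, prime_of B P /\ subset_of P Q /\ contracts_to A P p.

Definition mult_subset R (Sg : K -> Prop) : Prop :=
  subset_of Sg R /\ Sg 1 /\ ~ Sg 0 /\ (forall s t, Sg s -> Sg t -> Sg (s * t)).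

Definition localization R (Sg : K -> Prop) : K -> Prop :=
  fun x => exists a s, R a /\ Sg s /\ x = a / s.

Definition is_localization_of R S : Prop :=
  exists Sg, mult_subset R Sg /\ same_set S (localization R Sg).

Definition perinormal R : Prop :=
  forall S, overring R S -> local_ring S -> going_down R S ->
    is_localization_of R S.

Definition zero_ideal : K -> Prop := fun x => x = 0.

Definition height_one R p : Prop :=
  prime_of R p /\ (exists x, p x /\ x != 0) /\
  (forall q, prime_of R q -> subset_of q p ->
     same_set q zero_ideal \/ same_set q p).

Definition prime_compl R p : K -> Prop := fun s => R s /\ ~ p s.

Definition valuation_domain V : Prop :=
  subring V /\ forall x : K, x != 0 -> V x \/ V x^-1.

End CommAlg.

(* Main.v *)
Require Import Defs.
From mathcomp Require Import all_boot all_algebra ring zify.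
From mathcomp Require boolp classical_sets.
From Stdlib Require Import Classical.
Set Implicit Arguments. Unset Strict Implicit. Unset Printing Implicit Defensive.
Import GRing.Theory.
Local Open Scope ring_scope.

Section Polys.
Variable K : fieldType.
Implicit Types A S I : K -> Prop.

Fixpoint D S (x : K) (n : nat) : K -> Prop :=
  match n with
  | 0 => S
  | n'.+1 => fun z => exists d a, D S x n' d /\ S a /\ z = d + a * x ^+ n'.+1
  end.

Definition Smod A S := S 0 /\ (forall u v, S u -> S v -> S (u + v)) /\
  (forall a u, A a -> S u -> S (a * u)).

Lemma subring_mod A : subring A -> Smod A A.
Proof.
move=> [h0 [h1 [hs hm]]]; split; [|split]=> //.
move=> u v Hu Hv; rewrite -[v]opprK; apply hs => //.
by rewrite -sub0r; apply hs.
Qed.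

Lemma ideal_mod A I : ideal_of A I -> Smod A I.
Proof. by move=> [_ [h0 [ha hm]]]; split. Qed.

Lemma D_mod A S x n : Smod A S -> Smod A (D S x n).
Proof.
move=> HS; elim: n => [|n [IH0 [IHa IHm]]] //=.
have [S0 [Sa Sm]] := HS.
split; [|split].
- by exists 0, 0; split=> //; split=> //; rewrite mul0r addr0.
- move=> u v [d [a [Hd [Ha ->]]]] [d' [a' [Hd' [Ha' ->]]]].
  exists (d + d'), (a + a'); split; first exact: IHa.
  by split; [exact: Sa|ring].
- move=> b u Hb [d [a [Hd [Ha ->]]]].
  exists (b * d), (b * a); split; first exact: IHm.
  by split; [exact: Sm|ring].
Qed.

Lemma D_subS S S' x n z : subset_of S S' -> D S x n z -> D S' x n z.
Proof.
move=> H; elim: n z => [|n IH] z /=; first exact: H.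
by move=> [d [a [Hd [Ha ->]]]]; exists d, a; split; [exact: IH|split; [exact: H|]].
Qed.

Lemma D_succ S x n z : S 0 -> D S x n z -> D S x n.+1 z.
Proof. by move=> S0 Hz; exists z, 0; split=> //; split=> //; rewrite mul0r addr0. Qed.

Lemma D_le S x n m z : S 0 -> (n <= m)%N -> D S x n z -> D S x m z.
Proof.
move=> S0; elim: m => [|m IH]; first by rewrite leqn0 => /eqP ->.
rewrite leq_eqVlt => /orP [/eqP -> //|]; rewrite ltnS => Hle Hz.
exact/D_succ/IH.
Qed.

Lemma D_mon A S x a k n : Smod A S -> S a -> (k <= n)%N -> D S x n (a * x ^+ k).
Proof.
move=> HS Ha Hk; have S0 := HS.1; apply: (D_le S0 Hk).
case: k {Hk} => [|k] /=; first by rewrite expr0 mulr1.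
exists 0, a; split; last by split=> //; rewrite add0r.
exact: (D_mod x k HS).1.
Qed.

Lemma D_xmul A S x n z : Smod A S -> D S x n z -> D S x n.+1 (x * z).
Proof.
move=> HS; elim: n z => [|n IH] z /=.
  move=> Hz; exists 0, z; split; first exact: HS.1.
  by split=> //; rewrite expr1 add0r mulrC.
move=> [d [a [Hd [Ha ->]]]]; exists (x * d), a; split; first exact: IH.
by split=> //; rewrite [in RHS]exprS mulrDr mulrCA.
Qed.

Lemma D_powmul A S x n k z : Smod A S -> D S x n z -> D S x (n + k) (x ^+ k * z).
Proof.
move=> HS Hz; elim: k => [|k IH]; first by rewrite addn0 expr0 mul1r.
by rewrite addnS exprS -mulrA; exact: D_xmul HS IH.
Qed.

Lemma D_prod A S x m n e d : subring A -> Smod A S ->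
  D A x m e -> D S x n d -> D S x (n + m) (e * d).
Proof.
move=> HA HS; elim: m e => [|m IH] e /=.
  by move=> He Hd; rewrite addn0; apply: (D_mod x n HS).2.2.
move=> [e' [a [He' [Ha ->]]]] Hd.
have HD := D_mod x (n + m.+1) HS.
rewrite mulrDl -mulrA; apply: HD.2.1.
  rewrite addnS; apply: D_succ; [exact: HS.1|exact: IH].
by apply: HD.2.2 => //; exact: D_powmul HS Hd.
Qed.

Lemma D_const S y m z : D S y m.+1 z ->
  exists a h, S a /\ D S y m h /\ z = a + y * h.
Proof.
elim: m z => [|m IH] z /=.
  move=> [d [a [Hd [Ha ->]]]]; exists d, a; split=> //; split=> //.
  by rewrite expr1 mulrC.
move=> [d [a [Hd [Ha ->]]]].
have [a0 [h0 [Ha0 [Hh0 Hd0]]]] := IH d Hd.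
exists a0, (h0 + a * y ^+ m.+1); split=> //; split.
  by exists h0, a.
by rewrite Hd0 exprS; ring.
Qed.

Lemma D_swap A S x y j k z : Smod A S -> x * y = 1 -> (j <= k)%N ->
  D S y j z -> D S x k (x ^+ k * z).
Proof.
move=> HS Hxy; elim: j z => [|j IH] z Hjk /=.
  by move=> Hz; rewrite mulrC; apply: (D_mon _ HS).
move=> [d [a [Hd [Ha ->]]]].
rewrite mulrDr; apply: (D_mod x k HS).2.1; first by apply: IH => //; exact: ltnW.
have -> : x ^+ k * (a * y ^+ j.+1) = a * x ^+ (k - j.+1).
  rewrite -{1}(subnK Hjk) exprD.
  have : x ^+ j.+1 * y ^+ j.+1 = 1 by rewrite -exprMn Hxy expr1n.
  move=> H; rewrite -[RHS]mulr1 -H.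
  move: (x ^+ (k - j.+1)) (x ^+ j.+1) (y ^+ j.+1) => u v w; ring.
by apply: (D_mon _ HS) => //; exact: leq_subr.
Qed.

Lemma D_in_ideal A I x n z : subring A -> ideal_of A I -> A x -> D I x n z -> I z.
Proof.
move=> HA HI Hx; elim: n z => [|n IH] z //=.
move=> [d [a [Hd [Ha ->]]]]; apply: HI.2.2.1; first exact: IH.
rewrite mulrC; apply: HI.2.2.2 => //.
elim: n.+1 => [|k IHk]; first by rewrite expr0; exact: HA.2.1.
by rewrite exprS; apply: HA.2.2.2.
Qed.

End Polys.

Section Loc.
Variable K : fieldType.
Variables (R p : K -> Prop).
Hypothesis HR : subring R.
Hypothesis Hp : prime_of R p.

Definition Rp := localization R (prime_compl R p).
Definition pRp := localization p (prime_compl R p).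

Lemma compl_ne0 s : prime_compl R p s -> s != 0.
Proof. by move=> [_ Hs]; apply/eqP => E; apply: Hs; rewrite E; exact: Hp.1.2.1. Qed.

Lemma compl_mul s t : prime_compl R p s -> prime_compl R p t -> prime_compl R p (s * t).
Proof.
move=> [Rs ps] [Rt pt]; split; first exact: HR.2.2.2.
by move=> /(Hp.2.2 _ _ Rs Rt) [].
Qed.

Lemma compl1 : prime_compl R p 1.
Proof. by split; [exact: HR.2.1|exact: Hp.2.1]. Qed.

Lemma Rp_subring : subring Rp.
Proof.
split; [|split; [|split]].
- by exists 0, 1; split; [exact: HR.1|split; [exact: compl1|rewrite mul0r]].
- by exists 1, 1; split; [exact: HR.2.1|split; [exact: compl1|rewrite divr1]].
- move=> _ _ [a [s [Ra [Cs ->]]]] [b [t [Rb [Ct ->]]]].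
  exists (a * t - b * s), (s * t); split.
    by apply: HR.2.2.1; apply: HR.2.2.2 => //; [exact: Ct.1|exact: Cs.1].
  split; first exact: compl_mul.
  have := compl_ne0 Cs; have := compl_ne0 Ct => Ht Hs; field.
  by rewrite Hs Ht.
- move=> _ _ [a [s [Ra [Cs ->]]]] [b [t [Rb [Ct ->]]]].
  exists (a * b), (s * t); split; first exact: HR.2.2.2.
  split; first exact: compl_mul.
  have := compl_ne0 Cs; have := compl_ne0 Ct => Ht Hs; field.
  by rewrite Hs Ht.
Qed.

Lemma R_Rp : subset_of R Rp.
Proof. by move=> x Rx; exists x, 1; split=> //; split; [exact: compl1|rewrite divr1]. Qed.

Lemma pRp_ideal : ideal_of Rp pRp.
Proof.
have [[pR [p0 [padd pmul]]] _] := Hp.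
split; [|split; [|split]].
- by move=> _ [a [s [pa [Cs ->]]]]; exists a, s; split=> //; exact: pR.
- by exists 0, 1; split=> //; split; [exact: compl1|rewrite mul0r].
- move=> _ _ [a [s [Ra [Cs ->]]]] [b [t [Rb [Ct ->]]]].
  exists (a * t + b * s), (s * t); split.
    by apply: padd; rewrite mulrC; apply: pmul => //; [exact: Ct.1|exact: Cs.1].
  split; first exact: compl_mul.
  have := compl_ne0 Cs; have := compl_ne0 Ct => Ht Hs; field.
  by rewrite Hs Ht.
- move=> _ _ [a [s [Ra [Cs ->]]]] [b [t [Rb [Ct ->]]]].
  exists (a * b), (s * t); split; first exact: pmul.
  split; first exact: compl_mul.
  have := compl_ne0 Cs; have := compl_ne0 Ct => Ht Hs; field.
  by rewrite Hs Ht.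
Qed.

Lemma pRp_proper : ~ pRp 1.
Proof.
move=> [a [s [pa [Cs E]]]]; apply: Cs.2.
have Hs := compl_ne0 Cs.
have -> : s = a by rewrite -[s]mul1r E mulfVK.
done.
Qed.

Lemma p_pRp : subset_of p pRp.
Proof. by move=> x px; exists x, 1; split=> //; split; [exact: compl1|rewrite divr1]. Qed.

End Loc.

Section Main.
Variable K : fieldType.
Variables (R p : K -> Prop).
Hypothesis HR : subring R.
Hypothesis Hp : prime_of R p.

Definition Good (A I : K -> Prop) := subring A /\ ideal_of A I /\ ~ I 1 /\
  subset_of (Rp R p) A /\ subset_of p I.
Definition Maxl (A I : K -> Prop) := forall A' I', Good A' I' ->
  subset_of A A' -> subset_of I I' -> subset_of A' A /\ subset_of I' I.

Lemma pow_in (A : K -> Prop) x n : subring A -> A x -> A (x ^+ n).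
Proof.
move=> HA Hx; elim: n => [|n IH]; first by rewrite expr0; exact: HA.2.1.
by rewrite exprS; apply: HA.2.2.2.
Qed.

Lemma D_add (A S : K -> Prop) x n m u v : Smod A S -> D S x n u -> D S x m v -> D S x (n + m) (u + v).
Proof.
move=> HS Hu Hv; apply: (D_mod x (n + m) HS).2.1.
  by apply: (D_le HS.1 _ Hu); exact: leq_addr.
by apply: (D_le HS.1 _ Hv); exact: leq_addl.
Qed.

Lemma ext (A I : K -> Prop) x : Good A I -> ~ (exists n, D I x n 1) ->
  Good (fun z => exists n, D A x n z) (fun z => exists n, D I x n z).
Proof.
move=> [HA [HI [I1 [RpA pI]]]] N.
have MA := subring_mod HA; have MI := ideal_mod HI.
have Am1 : A (-1) by rewrite -sub0r; apply: HA.2.2.1; [exact: HA.1|exact: HA.2.1].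
split; [|split; [|split; [|split]]].
- split; [|split; [|split]].
  + by exists 0%N; exact: HA.1.
  + by exists 0%N; exact: HA.2.1.
  + move=> u v [n Hu] [m Hv]; exists (n + m)%N.
    rewrite -mulN1r; apply: (D_add MA Hu).
    exact: (D_mod x m MA).2.2.
  + move=> u v [n Hu] [m Hv]; exists (m + n)%N; exact: (D_prod HA MA Hu Hv).
- split; [|split; [|split]].
  + by move=> z [n Hz]; exists n; exact: (D_subS HI.1 Hz).
  + by exists 0%N; exact: MI.1.
  + by move=> u v [n Hu] [m Hv]; exists (n + m)%N; exact: (D_add MI Hu).
  + move=> u v [n Hu] [m Hv]; exists (m + n)%N; exact: (D_prod HA MI Hu Hv).
- exact: N.
- by move=> z Hz; exists 0%N; exact: RpA.
- by move=> z Hz; exists 0%N; exact: pI.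
Qed.

Section Maximal.
Variables A I : K -> Prop.
Hypothesis HG : Good A I.
Hypothesis HM : Maxl A I.

Let HA := HG.1.
Let HI := HG.2.1.
Let I1 := HG.2.2.1.

Lemma max_x x : ~ A x -> exists n, D I x n 1.
Proof.
move=> Nx; apply: NNPP => N.
have [sub _] := HM (ext HG N) (fun z Hz => ex_intro _ 0%N Hz)
  (fun z Hz => ex_intro _ 0%N Hz).
apply: Nx; apply: sub; exists 1%N; exists 0, 1; split; first exact: HA.1.
by split; [exact: HA.2.1|rewrite add0r mul1r expr1].
Qed.

Lemma max_prime a b : A a -> A b -> I (a * b) -> ~ I a -> I b.
Proof.
move=> Aa Ab Iab Na.
pose J z := exists i c, I i /\ A c /\ z = i + c * a.
have HJ : ideal_of A J.
  split; [|split; [|split]].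
  - move=> _ [i [c [Ii [Ac ->]]]]; apply: (subring_mod HA).2.1; first exact: HI.1.
    exact: HA.2.2.2.
  - by exists 0, 0; split; [exact: HI.2.1|split; [exact: HA.1|rewrite mul0r addr0]].
  - move=> _ _ [i [c [Ii [Ac ->]]]] [i' [c' [Ii' [Ac' ->]]]].
    exists (i + i'), (c + c'); split; first exact: HI.2.2.1.
    by split; [exact: (subring_mod HA).2.1|ring].
  - move=> d _ Ad [i [c [Ii [Ac ->]]]].
    exists (d * i), (d * c); split; first exact: HI.2.2.2.
    by split; [exact: HA.2.2.2|ring].
have IJ : subset_of I J.
  by move=> z Iz; exists z, 0; split=> //; split; [exact: HA.1|rewrite mul0r addr0].
have [i [c [Ii [Ac E]]]] : J 1.
  apply: NNPP => NJ.
  have GJ : Good A J.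
    split; first exact: HA; split; first exact: HJ; split; first exact: NJ.
    by split; [exact: HG.2.2.2.1|move=> z pz; apply: IJ; exact: HG.2.2.2.2].
  have [_ JI] := HM GJ (fun z Hz => Hz) IJ.
  apply: Na; apply: JI; exists 0, 1; split; first exact: HI.2.1.
  by split; [exact: HA.2.1|rewrite add0r mul1r].
have -> : b = b * i + c * (a * b).
  by rewrite -[LHS]mulr1 E; ring.
apply: HI.2.2.1; first by apply: HI.2.2.2.
exact: HI.2.2.2.
Qed.

Lemma max_unit s : A s -> ~ I s -> A s^-1.
Proof.
move=> As Ns.
have s0 : s != 0 by apply/eqP => E; apply: Ns; rewrite E; exact: HI.2.1.
apply: NNPP => N.
have [n Hn] := max_x N.
have H1 : D I s n (s ^+ n * 1) := D_swap (ideal_mod HI) (mulfV s0) (leqnn n) Hn.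
have := D_in_ideal HA HI As H1; rewrite mulr1.
elim: n {Hn H1} => [|n IH]; first by rewrite expr0.
rewrite exprS => H; apply: IH; apply: (max_prime As _ H Ns).
exact: pow_in.
Qed.

Lemma red x y m n : x * y = 1 -> D I y m.+1 1 -> (m <= n)%N -> D I x n.+1 1 -> D I x n 1.
Proof.
move=> Hxy Hy Hmn Hx.
have MI := ideal_mod HI.
have [g0 [h [Ig0 [Hh E]]]] := D_const Hy.
pose u := 1 - g0.
have Au : A u by apply: HA.2.2.1; [exact: HA.2.1|exact: HI.1].
have Nu : ~ I u.
  by move=> Iu; apply: I1; have := HI.2.2.1 _ _ Iu Ig0; rewrite subrK.
have u0 : u != 0 by apply/eqP => E0; apply: Nu; rewrite E0; exact: HI.2.1.
have Av := max_unit Au Nu.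
have Hvh : D I y m (u^-1 * h) := (D_mod y m MI).2.2 _ _ Av Hh.
have H2 := D_swap MI Hxy Hmn Hvh.
have Eu : u = y * h by rewrite /u {1}E addrC addKr.
have Ex : x ^+ n * (u^-1 * h) = x ^+ n.+1.
  have : u^-1 * u = 1 by rewrite mulVf.
  rewrite Eu => Hvu.
  rewrite -[RHS]mulr1 -Hvu exprSr.
  rewrite -[in LHS](mulr1 (x ^+ n)) -Hxy.
  move: (x ^+ n) (y * h)^-1 => X W; ring.
move: Hx => /= [d [a [Hd [Ia Ed]]]]; rewrite Ed -Ex.
have [_ [Dadd Dmul]] := D_mod x n MI.
apply: Dadd; first exact: Hd.
by apply: Dmul; [exact: HI.1|exact: H2].
Qed.

Lemma pingpong N : forall x y n m, (n + m <= N)%N -> x * y = 1 ->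
  D I x n 1 -> D I y m 1 -> False.
Proof.
elim: N => [|N IH] x y n m Hnm Hxy Hx Hy.
  case: n Hnm Hx => [|n] Hnm Hx; first exact: I1 Hx.
  by case: m Hnm Hy.
case: n Hnm Hx => [|n] Hnm Hx; first exact: I1 Hx.
case: m Hnm Hy => [|m] Hnm Hy; first exact: I1 Hy.
have [Hle|Hlt] := leqP m n.
  apply: (IH x y n m.+1); [lia|exact: Hxy|exact: (red Hxy Hy Hle Hx)|exact: Hy].
have Hyx : y * x = 1 by rewrite mulrC.
apply: (IH y x m n.+1); [lia|exact: Hyx|exact: (red Hyx Hx (ltnW Hlt) Hy)|exact: Hx].
Qed.

Lemma max_val x : x != 0 -> A x \/ A x^-1.
Proof.
move=> x0; apply: NNPP => N.
have [n Hn] := max_x (fun H => N (or_introl H)).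
have [m Hm] := max_x (fun H => N (or_intror H)).
exact: (@pingpong (n + m) x x^-1 n m (leqnn _) (mulfV x0) Hn Hm).
Qed.

End Maximal.
End Main.

Section Z.
Variable K : fieldType.
Variables (R p : K -> Prop).
Hypothesis HR : subring R.
Hypothesis Hp : prime_of R p.

Lemma good0 : Good R p (Rp R p) (pRp R p).
Proof.
split; first exact: Rp_subring.
split; first exact: pRp_ideal.
split; first exact: pRp_proper.
by split; [move=> z|exact: p_pRp].
Qed.

Lemma exists_max : exists A I, Good R p A I /\ Maxl R p A I.
Proof.
pose T := {q : (K -> Prop) * (K -> Prop) | Good R p q.1 q.2}.
pose Rel (s t : T) := boolp.asbool (subset_of (sval s).1 (sval t).1 /\
   subset_of (sval s).2 (sval t).2).
pose t0 : T := exist _ (Rp R p, pRp R p) good0.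
have [|||t tmax] := @classical_sets.ZL_preorder T t0 Rel.
- move=> s; rewrite /Rel; apply/boolp.asboolP; split=> z Hz; exact: Hz.
- rewrite /Rel; move=> a b c /boolp.asboolP [H1 H2] /boolp.asboolP [H3 H4]; apply/boolp.asboolP.
  by split=> z Hz; [apply: H3; apply: H1|apply: H4; apply: H2].
- rewrite /Rel; move=> Ch Htot.
  case: (classic (exists c, Ch c)) => [[c0 Cc0]|Nc]; last first.
    by exists t0 => s Cs; exfalso; apply: Nc; exists s.
  have two : forall c1 c2, Ch c1 -> Ch c2 -> exists c, Ch c /\
      subset_of (sval c1).1 (sval c).1 /\ subset_of (sval c1).2 (sval c).2 /\
      subset_of (sval c2).1 (sval c).1 /\ subset_of (sval c2).2 (sval c).2.
    move=> c1 c2 C1 C2; case: (Htot c1 c2 C1 C2) => /boolp.asboolP [H1 H2].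
      by exists c2; do !split=> //.
    by exists c1; do !split=> //.
  pose UA z := exists c, Ch c /\ (sval c).1 z.
  pose UI z := exists c, Ch c /\ (sval c).2 z.
  have GU : Good R p UA UI.
    have G (c : T) : Good R p (sval c).1 (sval c).2 := proj2_sig c.
    split; [|split; [|split; [|split]]].
    + split; [|split; [|split]].
      * by exists c0; split=> //; exact: (G c0).1.1.
      * by exists c0; split=> //; exact: (G c0).1.2.1.
      * move=> u v [c1 [C1 H1]] [c2 [C2 H2]].
        have [c [C [h1 [_ [h2 _]]]]] := two c1 c2 C1 C2.
        by exists c; split=> //; apply: (G c).1.2.2.1; [apply: h1|apply: h2].
      * move=> u v [c1 [C1 H1]] [c2 [C2 H2]].
        have [c [C [h1 [_ [h2 _]]]]] := two c1 c2 C1 C2.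
        by exists c; split=> //; apply: (G c).1.2.2.2; [apply: h1|apply: h2].
    + split; [|split; [|split]].
      * by move=> z [c [C H]]; exists c; split=> //; apply: (G c).2.1.1.
      * by exists c0; split=> //; exact: (G c0).2.1.2.1.
      * move=> u v [c1 [C1 H1]] [c2 [C2 H2]].
        have [c [C [_ [h1 [_ h2]]]]] := two c1 c2 C1 C2.
        by exists c; split=> //; apply: (G c).2.1.2.2.1; [apply: h1|apply: h2].
      * move=> u v [c1 [C1 H1]] [c2 [C2 H2]].
        have [c [C [h1 [_ [_ h2]]]]] := two c1 c2 C1 C2.
        by exists c; split=> //; apply: (G c).2.1.2.2.2; [apply: h1|apply: h2].
    + by move=> [c [C H]]; exact: (G c).2.2.1 H.
    + by move=> z Hz; exists c0; split=> //; apply: (G c0).2.2.2.1.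
    + by move=> z Hz; exists c0; split=> //; apply: (G c0).2.2.2.2.
  exists (exist _ (UA, UI) GU) => s Cs; apply/boolp.asboolP.
  by split=> z Hz /=; exists s.
rewrite /Rel in tmax; exists (sval t).1, (sval t).2; split; first exact: (proj2_sig t).
move=> A' I' G' H1 H2.
have := tmax (exist _ (A', I') G') (boolp.asboolT (conj H1 H2)).
by move=> /boolp.asboolP.
Qed.
End Z.

Theorem proposition3p2 (K : fieldType) (R : K -> Prop) :
  subring R -> frac_field_of R -> perinormal R ->
  forall p : K -> Prop, height_one R p ->
    valuation_domain (localization R (prime_compl R p)).
Proof.
move=> HR _ Hper p Hh.
have Hp := Hh.1.
have [A [I [HG HM]]] := exists_max HR Hp.
have [HA [HI [I1 [RpA pI]]]] := HG.
have unit := max_unit HG HM.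
have ne0 : forall z, ~ I z -> z != 0.
  by move=> z Nz; apply/eqP => E; apply: Nz; rewrite E; exact: HI.2.1.
have propI : forall J, ideal_of A J -> ~ J 1 -> subset_of J I.
  move=> J HJ J1 z Jz; apply: NNPP => Nz; apply: J1.
  rewrite -(mulVf (ne0 _ Nz)); apply: HJ.2.2.2 => //.
  by apply: unit => //; exact: HJ.1.
have IrR : forall r, R r -> I r -> p r.
  move=> r Rr Ir; apply: NNPP => Nr.
  have Cr : prime_compl R p r by split.
  have Ar : A r^-1.
    by apply: RpA; exists 1, r; split; [exact: HR.2.1|split=> //; rewrite div1r].
  apply: I1; rewrite -(mulVf (compl_ne0 Hp Cr)); exact: HI.2.2.2.
have RA : subset_of R A by move=> z Rz; apply: RpA; exact: R_Rp.
have [Sg [HSg Hsame]] : is_localization_of R A.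
  apply: Hper.
  - by split.
  - exists I; split.
      split; first exact: HI; split; first exact: I1.
      move=> J HJ J1 _; exact: propI.
    move=> N [HN [N1 Nmax]] z; split; first exact: (propI _ HN N1).
    exact: (Nmax I HI I1 (propI _ HN N1)).
  - move=> p' q Q Hp' Hq Hpq HQ Hc.
    have qp : subset_of q p.
      move=> x qx; have Rx := Hq.1.1 _ qx.
      apply: IrR => //; apply: (propI _ HQ.1 HQ.2.1); exact: (Hc x Rx).2.
    case: (Hh.2.2 p' Hp' (fun x px => qp x (Hpq x px))) => [Z|Pp].
    + exists (@zero_ideal K); split; last split.
      * split; [|split].
        -- split; [|split; [|split]].
           ++ by move=> z ->; exact: HA.1.
           ++ by [].
           ++ by move=> x y -> ->; rewrite addr0.
           ++ by move=> a x _ ->; rewrite mulr0.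
        -- by move=> E; have := oner_neq0 K; rewrite E eqxx.
        -- by move=> a b _ _ /eqP; rewrite mulf_eq0 => /orP [/eqP|/eqP]; [left|right].
      * by move=> z ->; exact: HQ.1.2.1.
      * by move=> x Rx; split=> H; apply/Z.
    + exists Q; split; first exact: HQ; split; first by [].
      move=> x Rx; rewrite (Hc x Rx); split; last exact: Hpq.
      by move=> qx; apply/Pp; apply: qp.
have ARp : subset_of A (Rp R p).
  move=> z Az; have [a [s [Ra [Ss E]]]] := (Hsame z).1 Az.
  have Rs := HSg.1 _ Ss.
  have s0 : s != 0 by apply/eqP => E0; apply: HSg.2.2.1; rewrite -E0.
  have As' : A s^-1.
    by apply/(Hsame _).2; exists 1, s; split; [exact: HR.2.1|split=> //; rewrite div1r].
  exists a, s; split=> //; split=> //; split=> // ps.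
  apply: I1; rewrite -(mulVf s0); apply: HI.2.2.2 => //; exact: pI.
split; first exact: Rp_subring.
move=> x x0; case: (max_val HG HM x0) => H; [left|right]; exact: ARp.
Qed.
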